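(* Suppose $\nu=\nu_1\times\nu_2\times\cdots\times\nu_d$ is a product probability measure on $\mathcal X=\{1,\dots,B\}^d$. Let $\mathfrak T_1$ and $\mathfrak T_2$ be two tree structures, and let $I_1,I_2\subset\{1,\dots,d\}$ be disjoint sets of indices such that $\mathfrak T_1$ and $\mathfrak T_2$ contain splits only on features in $I_1$ and $I_2$ respectively. Then every local decision stump of $\mathfrak T_1$ is orthogonal in $L^2(\nu)$ to every local decision stump of $\mathfrak T_2$.
   Context: A tree structure is a finite rooted binary tree whose internal nodes carry splitting rules $(v,t)$; each node corresponds to a rectangular region $\mathfrak t\subset\mathcal X$, with the root corresponding to $\mathcal X$, and an internal node $\mathfrak t$ with rule $(v,t)$ has children $\mathfrak t_L=\{\mathbf x\in\mathfrak t:x_v\le t\}$ and $\mathfrak t_R=\{\mathbf x\in\mathfrak t:x_v>t\}$ (both nonempty). A tree ''splits on feature $v$'' if some internal node has a rule with feature $v$. For each internal node $\mathfrak t$, the local decision stump is the function $$\psi(\mathbf x)=\frac{\nu(\mathfrak t_R)\mathbf 1\{\mathbf x\in\mathfrak t_L\}-\nu(\mathfrak t_L)\mathbf 1\{\mathbf x\in\mathfrak t_R\}}{\sqrt{\nu(\mathfrak t_L)\nu(\mathfrak t_R)}}.$$ *)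

(* Defs.v *)
From HB Require Import structures.
From mathcomp Require Import all_boot all_order all_algebra.
From mathcomp Require Import reals.
Set Implicit Arguments. Unset Strict Implicit. Unset Printing Implicit Defensive.
Import Order.TTheory GRing.Theory Num.Theory.
Local Open Scope ring_scope.

(* Feature space X = {1,...,B}^d, encoded as functions 'I_d -> 'I_B
   (values 0..B-1, order preserved). *)
Definition pt (d B : nat) := {ffun 'I_d -> 'I_B}.

Inductive tree (d B : nat) : Type :=
| Leaf
| Node of 'I_d & 'I_B & tree d B & tree d B.
Arguments Leaf {d B}.

Section Trees.
Variables (d B : nat).

Definition left_child (A : {set pt d B}) (v : 'I_d) (t : 'I_B) : {set pt d B} :=
  [set x in A | (x v <= t)%N].
Definition right_child (A : {set pt d B}) (v : 'I_d) (t : 'I_B) : {set pt d B} :=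
  [set x in A | (t < x v)%N].

Fixpoint wf_tree (T : tree d B) (A : {set pt d B}) : bool :=
  match T with
  | Leaf => true
  | Node v t L R =>
      [&& left_child A v t != set0, right_child A v t != set0,
          wf_tree L (left_child A v t) & wf_tree R (right_child A v t)]
  end.

Fixpoint internal_nodes (T : tree d B) (A : {set pt d B})
  : seq ({set pt d B} * 'I_d * 'I_B) :=
  match T with
  | Leaf => [::]
  | Node v t L R =>
      (A, v, t) :: internal_nodes L (left_child A v t)
                ++ internal_nodes R (right_child A v t)
  end.

Definition is_tree_structure (T : tree d B) := wf_tree T setT.
Definition nodes (T : tree d B) := internal_nodes T setT.

Definition splits_only_on (T : tree d B) (I : {set 'I_d}) : Prop :=
  forall n, n \in nodes T -> n.1.2 \in I.

Variable R : realType.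

Definition is_prob (p : 'I_B -> R) : Prop :=
  (forall b, 0 <= p b) /\ \sum_b p b = 1.

Definition prod_weight (p : 'I_d -> 'I_B -> R) (x : pt d B) : R :=
  \prod_v p v (x v).

Definition nu (p : 'I_d -> 'I_B -> R) (A : {set pt d B}) : R :=
  \sum_(x in A) prod_weight p x.

Definition stump (p : 'I_d -> 'I_B -> R) (n : {set pt d B} * 'I_d * 'I_B)
    (x : pt d B) : R :=
  let A := n.1.1 in let v := n.1.2 in let t := n.2 in
  let AL := left_child A v t in let AR := right_child A v t in
  (nu p AR * (x \in AL)%:R - nu p AL * (x \in AR)%:R)
    / Num.sqrt (nu p AL * nu p AR).

Definition L2dot (p : 'I_d -> 'I_B -> R) (f g : pt d B -> R) : R :=
  \sum_x prod_weight p x * f x * g x.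

End Trees.

(* Main.v *)
Require Import Defs.
From HB Require Import structures.
From mathcomp Require Import all_boot all_order all_algebra.
From mathcomp Require Import reals.
From mathcomp Require Import ring.
Import Order.TTheory GRing.Theory Num.Theory.
Set Implicit Arguments. Unset Strict Implicit.
Local Open Scope ring_scope.

Section Aux.
Variables (R : realType) (d B : nat) (p : 'I_d -> 'I_B -> R).

Definition dep_on (I : {set 'I_d}) (F : pt d B -> R) :=
  forall x z : pt d B, (forall v, v \in I -> x v = z v) -> F x = F z.

Definition closedI (I : {set 'I_d}) (A : {set pt d B}) :=
  forall x z : pt d B, (forall v, v \in I -> x v = z v) -> (x \in A) = (z \in A).

Definition mix (I : {set 'I_d}) (x y : pt d B) : pt d B :=
  [ffun v => if v \in I then x v else y v].

Lemma sum_w1 : (forall v, \sum_b p v b = 1) -> \sum_x prod_weight p x = 1.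
Proof.
move=> H; rewrite /prod_weight.
have := (bigA_distr_bigA (fun v b => p v b)) => /= <-.
by rewrite big1.
Qed.

Lemma indep (I : {set 'I_d}) (F G : pt d B -> R) :
  (forall v, \sum_b p v b = 1) -> dep_on I F -> dep_on (~: I) G ->
  \sum_x prod_weight p x * F x * G x =
  (\sum_x prod_weight p x * F x) * (\sum_x prod_weight p x * G x).
Proof.
move=> H1 HF HG.
rewrite -[LHS]mulr1 -(sum_w1 H1) mulr_suml.
under eq_bigr do rewrite mulr_sumr.
rewrite mulr_suml; under [RHS]eq_bigr do rewrite mulr_sumr.
rewrite !pair_bigA /=.
pose h (q : pt d B * pt d B) := (mix I q.1 q.2, mix I q.2 q.1).
have hK : cancel h h.
  move=> [x y]; rewrite /h /mix /=; congr pair; apply/ffunP => v;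
  by rewrite !ffunE; case: (v \in I).
rewrite (reindex_inj (can_inj hK)) /=.
apply: eq_bigr => [[x y]] _ /=.
have -> : F (mix I x y) = F x.
  by apply: HF => v vI; rewrite ffunE vI.
have -> : G (mix I x y) = G y.
  by apply: HG => v; rewrite inE => vI; rewrite ffunE (negbTE vI).
have Hw : prod_weight p (mix I x y) * prod_weight p (mix I y x) =
          prod_weight p x * prod_weight p y.
  rewrite /prod_weight -!big_split /=; apply: eq_bigr => v _.
  by rewrite !ffunE; case: (v \in I); rewrite // mulrC.
move: Hw; move: (prod_weight p (mix I x y)) (prod_weight p (mix I y x))
  (prod_weight p x) (prod_weight p y) (F x) (G y) => a b a' b' c e Hw.
transitivity ((a * b) * c * e); first by ring.
rewrite Hw; ring.
Qed.

Lemma stump_mean n : \sum_x prod_weight p x * stump p n x = 0.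
Proof.
have E : forall A : {set pt d B}, \sum_x prod_weight p x * (x \in A)%:R = nu p A.
  move=> A; rewrite /nu (bigID (fun x => x \in A)) /= [X in _ + X]big1.
    by rewrite addr0; apply: eq_bigr => x ->; rewrite mulr1.
  by move=> x /negbTE ->; rewrite mulr0.
rewrite /stump.
set AL := left_child _ _ _; set AR := right_child _ _ _.
set c := Num.sqrt _.
transitivity (c^-1 * (nu p AR * \sum_x prod_weight p x * (x \in AL)%:R
                    - nu p AL * \sum_x prod_weight p x * (x \in AR)%:R)).
  rewrite !mulr_sumr -sumrB mulr_sumr; apply: eq_bigr => x _.
  move: (prod_weight p x) (nu p AR) (nu p AL) ((x \in AL)%:R) ((x \in AR)%:R) => a b e f g.
  ring.
by rewrite !E [nu p AR * _]mulrC subrr mulr0.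
Qed.

Lemma nodes_closed (I : {set 'I_d}) (T : tree d B) (A : {set pt d B}) :
  closedI I A -> (forall n, n \in internal_nodes T A -> n.1.2 \in I) ->
  forall n, n \in internal_nodes T A -> closedI I n.1.1 /\ n.1.2 \in I.
Proof.
elim: T A => [|v t L IHL Rt IHR] A cA Hs n //=.
have Hv : v \in I by apply: (Hs (A, v, t)); rewrite inE eqxx.
have cL : closedI I (left_child A v t).
  by move=> x z Hxz; rewrite !inE (cA x z Hxz) (Hxz v Hv).
have cR : closedI I (right_child A v t).
  by move=> x z Hxz; rewrite !inE (cA x z Hxz) (Hxz v Hv).
rewrite inE => /orP [/eqP -> //| ]; rewrite mem_cat => /orP [nL|nR].
  apply: (IHL _ cL) => // m mL; apply: Hs; by rewrite inE mem_cat mL orbT.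
apply: (IHR _ cR) => // m mR; apply: Hs; by rewrite inE mem_cat mR !orbT.
Qed.

Lemma stump_dep (I : {set 'I_d}) n : closedI I n.1.1 -> n.1.2 \in I ->
  dep_on I (stump p n).
Proof.
move=> cA Hv x z Hxz; rewrite /stump !inE (cA x z Hxz) (Hxz _ Hv) //.
Qed.

End Aux.

Theorem lemmaF1 (R : realType) (d B : nat) (p : 'I_d -> 'I_B -> R)
  (T1 T2 : tree d B) (I1 I2 : {set 'I_d}) :
  (forall v, is_prob (p v)) ->
  is_tree_structure T1 -> is_tree_structure T2 ->
  [disjoint I1 & I2] ->
  splits_only_on T1 I1 -> splits_only_on T2 I2 ->
  forall n1 n2, n1 \in nodes T1 -> n2 \in nodes T2 ->
  L2dot p (stump p n1) (stump p n2) = 0.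
Proof.
move=> Hp _ _ Hdis S1 S2 n1 n2 H1 H2.
have cT : forall I, closedI I (setT : {set pt d B}) by move=> I x z _; rewrite !inE.
have [c1 v1] := nodes_closed (cT I1) S1 H1.
have [c2 v2] := nodes_closed (cT I2) S2 H2.
rewrite /L2dot (@indep R d B p I1).
- by rewrite (stump_mean p n2) mulr0.
- by move=> v; case: (Hp v).
- exact: stump_dep.
have D := stump_dep p c2 v2.
move=> x z Hxz; apply: D => v vI2; apply: Hxz.
rewrite inE; apply/negP => vI1.
by move: Hdis => /pred0P /(_ v) /=; rewrite vI1 vI2.
Qed.
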